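(* In the continuous scenario with constant request rate $\lambda$ over $\mathcal X$, for any cache state $\mathcal S$, \[ \bar C(\mathcal S) \ge \lambda k F\left(\frac{|\mathcal X|}{k}\right). \]
   Context: $\mathcal X$ is a bounded (compact) subset of $\mathbb R^p$, a cache holds $k$ objects, $C_a(x,y)=h(\|x-y\|)$ with $h:\mathbb R^+\to\mathbb R^+$ non-decreasing and $\|\cdot\|$ a norm, $C_r>0$ is the retrieval cost, $C(x,y)=\min(C_a(x,y),C_r)$ and $C(x,\mathcal S)=\min(\inf_{y\in\mathcal S}C_a(x,y),C_r)$. Requests have constant spatial density $\lambda$ over $\mathcal X$, and the expected cost of cache state $\mathcal S$ is $\bar C(\mathcal S)=\int_{\mathcal X}\lambda\,C(x,\mathcal S)\,dx$. $|\mathcal A|$ denotes the volume (Lebesgue measure) of $\mathcal A$, $\mathcal B(y,v)$ the ball of volume $v$ centered in $y$, and $F(v)=\int_{\mathcal B(y,v)}C(x,y)\,dx$ (independent of $y$). *)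

(* Defs.v *)
From HB Require Import structures.
From mathcomp Require Import all_boot all_order all_algebra.
From mathcomp Require Import all_classical all_reals all_analysis.
Set Implicit Arguments. Unset Strict Implicit. Unset Printing Implicit Defensive.
Import Order.TTheory GRing.Theory Num.Theory.
Import numFieldNormedType.Exports.
Local Open Scope classical_set_scope.
Local Open Scope ring_scope.

(* R^p equipped with its Borel sigma-algebra (generated by the open sets of
   the product topology of 'rV[R]_p). *)
Definition Rp (R : realType) (p : nat) := g_sigma_algebraType (@open 'rV[R]_p).

Definition unit_cube (R : realType) (p : nat) : set 'rV[R]_p :=
  [set x | forall i, 0 <= x ord0 i < 1].

(* mu is the p-dimensional Lebesgue measure on the Borel sets of R^p:
   the translation-invariant Borel measure giving measure 1 to the unit cube
   (this characterizes Lebesgue measure uniquely). *)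
Definition is_lebesgue_measure (R : realType) (p : nat)
    (mu : {measure set (Rp R p) -> \bar R}) : Prop :=
  (forall (A : set (Rp R p)) (a : 'rV[R]_p), measurable A ->
      mu ((fun x : 'rV[R]_p => x + a) @` (A : set 'rV[R]_p) : set (Rp R p)) = mu A) /\
  mu (@unit_cube R p : set (Rp R p)) = 1%E.

Definition is_norm (R : realType) (p : nat) (nrm : 'rV[R]_p -> R) : Prop :=
  (forall x, nrm x = 0 -> x = 0) /\
  (forall (a : R) x, nrm (a *: x) = `|a| * nrm x) /\
  (forall x y, nrm (x + y) <= nrm x + nrm y).

Definition nball (R : realType) (p : nat) (nrm : 'rV[R]_p -> R)
    (y : 'rV[R]_p) (r : R) : set 'rV[R]_p :=
  [set x | nrm (x - y) <= r].

Definition is_ball_of_volume (R : realType) (p : nat)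
    (mu : {measure set (Rp R p) -> \bar R}) (nrm : 'rV[R]_p -> R)
    (y : 'rV[R]_p) (v : \bar R) (B : set 'rV[R]_p) : Prop :=
  exists r : R, 0 <= r /\ B = nball nrm y r /\ mu (B : set (Rp R p)) = v.

Definition Ca (R : realType) (p : nat) (h : R -> R) (nrm : 'rV[R]_p -> R)
    (x y : 'rV[R]_p) : R := h (nrm (x - y)).

Definition cost (R : realType) (p : nat) (h : R -> R) (nrm : 'rV[R]_p -> R)
    (Cr : R) (x y : 'rV[R]_p) : R := Num.min (Ca h nrm x y) Cr.

(* C(x,S) = min(inf_{y in S} C_a(x,y), C_r), for the cache state
   S = {y_0, ..., y_(k-1)} (finite, so the inf is a min) *)
Definition cost_set (R : realType) (p k : nat) (h : R -> R)
    (nrm : 'rV[R]_p -> R) (Cr : R) (x : 'rV[R]_p) (y : 'I_k -> 'rV[R]_p) : R :=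
  \big[Num.min/Cr]_(i < k) Ca h nrm x (y i).

Definition exp_cost (R : realType) (p k : nat)
    (mu : {measure set (Rp R p) -> \bar R}) (X : set 'rV[R]_p)
    (lambda : R) (h : R -> R) (nrm : 'rV[R]_p -> R) (Cr : R)
    (y : 'I_k -> 'rV[R]_p) : \bar R :=
  (\int[mu]_(x in (X : set (Rp R p))) (lambda * cost_set h nrm Cr x y)%:E)%E.

(* F(v) = \int_{B(y,v)} C(x,y) dx, for a ball B = B(y,v) *)
Definition Fball (R : realType) (p : nat)
    (mu : {measure set (Rp R p) -> \bar R}) (h : R -> R)
    (nrm : 'rV[R]_p -> R) (Cr : R) (y : 'rV[R]_p) (B : set 'rV[R]_p) : \bar R :=
  (\int[mu]_(x in (B : set (Rp R p))) (cost h nrm Cr x y)%:E)%E.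

(* Main.v *)
Require Import Defs.
From HB Require Import structures.
From mathcomp Require Import all_boot all_order all_algebra.
From mathcomp Require Import all_classical all_reals all_analysis.
From mathcomp Require Import ring lra.
From mathcomp Require Import measurable_realfun.
Import Order.TTheory GRing.Theory Num.Theory.
Import numFieldNormedType.Exports.
Local Open Scope classical_set_scope.
Local Open Scope ring_scope.
Section N.
Variables (R : realType) (p : nat) (nrm : 'rV[R]_p -> R).
Hypothesis hn : is_norm nrm.

Lemma nrm0 : nrm 0 = 0.
Proof. by case: hn => _ [hZ _]; rewrite -(scale0r (0 : 'rV[R]_p)) hZ normr0 mul0r. Qed.

Lemma nrmN x : nrm (- x) = nrm x.
Proof. by case: hn => _ [hZ _]; rewrite -scaleN1r hZ normrN normr1 mul1r. Qed.

Lemma nrm_ge0 x : 0 <= nrm x.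
Proof.
case: hn => _ [_ hT]. have := hT x (- x). rewrite subrr nrm0 nrmN.
move=> H; have : 0 <= nrm x *+ 2 by rewrite mulr2n. by rewrite pmulrn_lge0.
Qed.

Lemma nrm_dist x z : `|nrm x - nrm z| <= nrm (x - z).
Proof.
case: hn => _ [_ hT].
rewrite ler_norml; apply/andP; split.
- have := hT (z - x) x. rewrite subrK -opprB nrmN. move=> H. lra.
- have := hT (x - z) z. rewrite subrK. move=> H. lra.
Qed.

Lemma nrm_sum (I : eqType) (s : seq I) (F : I -> 'rV[R]_p) :
  nrm (\sum_(i <- s) F i) <= \sum_(i <- s) nrm (F i).
Proof.
case: hn => _ [_ hT].
apply: (big_ind2 (fun a b => nrm a <= b)); first by rewrite nrm0.
- move=> a b c d H1 H2; apply: le_trans (hT _ _) _; exact: lerD.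
- by [].
Qed.

Definition Snrm := \sum_(j < p) nrm (delta_mx 0 j).

Lemma Snrm_ge0 : 0 <= Snrm.
Proof. by apply: sumr_ge0 => j _; exact: nrm_ge0. Qed.

Lemma nrm_lip (u : 'rV[R]_p) (d : R) : (forall j, `|u 0 j| <= d) -> nrm u <= d * Snrm.
Proof.
case: hn => _ [hZ _] Hu.
rewrite [in X in nrm X](row_sum_delta u).
apply: le_trans (nrm_sum _ _ _) _.
rewrite /Snrm mulr_sumr; apply: ler_sum => j _.
rewrite hZ; apply: ler_wpM2r; [exact: nrm_ge0| exact: Hu].
Qed.

Lemma nrm_cont (a : 'rV[R]_p) : continuous (fun z : 'rV[R]_p => nrm (z - a)).
Proof.
move=> x; apply/(@cvgrPdist_lt _ _ _ (nbhs (x : 'rV[R]_p)) _) => e e0.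
apply/nbhs_ballP; exists (e / (Snrm + 1)) => /=.
  by apply: divr_gt0 => //; have := Snrm_ge0; lra.
move=> z [_ Hz].
apply: le_lt_trans (nrm_dist _ _) _.
have -> : x - a - (z - a) = x - z by rewrite opprB addrA subrK.
apply: le_lt_trans (nrm_lip _ (e / (Snrm + 1)) _) _.
  move=> j; have := Hz 0 j; rewrite /ball /= !mxE => H; exact: ltW.
have S0 := Snrm_ge0.
rewrite mulrAC ltr_pdivrMr; last lra.
nra.
Qed.
End N.
Section T.
Variables (R : realType) (p : nat) (mu : {measure set (Rp R p) -> \bar R}).
Hypothesis hmu : is_lebesgue_measure mu.

Lemma shift_cont (a : 'rV[R]_p) : continuous (fun x : 'rV[R]_p => x - a).
Proof.
move=> x.
apply: (@continuousB R 'rV[R]_p 'rV[R]_p (fun x => x) (fun=> a) x).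
  exact: cvg_id.
move=> A aA; rewrite /nbhs /=. exists (fun _ _ => setT) => /=; first by move=> i j; exact: filterT.
by move=> y _; exact: nbhs_singleton aA.
Qed.

Lemma cont_meas_rV (f : 'rV[R]_p -> 'rV[R]_p) : continuous f ->
  measurable_fun (setT : set (Rp R p)) (f : Rp R p -> Rp R p).
Proof.
move=> cf.
apply: (@measurability _ _ (Rp R p) (Rp R p) setT f (@open 'rV[R]_p)) => //.
move=> _ [A oA <-].
rewrite setTI; apply: sub_sigma_algebra.
apply: open_comp => //; by move=> z _; exact: cf.
Qed.

Lemma shift_meas (a : 'rV[R]_p) :
  measurable_fun (setT : set (Rp R p)) ((fun x : 'rV[R]_p => x - a) : Rp R p -> Rp R p).
Proof. exact: cont_meas_rV (shift_cont a). Qed.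

Lemma preim_shift (a : 'rV[R]_p) (A : set 'rV[R]_p) :
  (fun x : 'rV[R]_p => x - a) @^-1` A = (fun x => x + a) @` A.
Proof.
apply/seteqP; split => x /=.
  by move=> Ax; exists (x - a) => //; rewrite subrK.
by move=> [z Az <-]; rewrite addrK.
Qed.

Lemma integral_shift (a : 'rV[R]_p) (D : set (Rp R p)) (f : Rp R p -> \bar R) :
  measurable D -> measurable_fun D f -> (forall x, D x -> (0 <= f x)%E) ->
  (\int[mu]_(x in ((fun x : 'rV[R]_p => (x - a)%R) @^-1` D : set (Rp R p))) f (x - a)%R
   = \int[mu]_(x in D) f x)%E.
Proof.
move=> mD mf f0.
rewrite -(ge0_integral_pushforward (shift_meas a) mu mD mf); last by move=> x /[!inE]; exact: f0.
apply: eq_measure_integral; first exact: shift_meas.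
move=> mph A mA _.
transitivity (mu ((fun x : 'rV[R]_p => (x - a)%R) @^-1` A : set (Rp R p))); first by [].
rewrite preim_shift; case: hmu => H _; exact: H.
Qed.

Lemma cont_meas (f : 'rV[R]_p -> R) : continuous f ->
  measurable_fun (setT : set (Rp R p)) (f : Rp R p -> R).
Proof.
move=> cf.
apply: (measurability (@measurable_realfun.RGenOpens.G R)).
  exact: measurable_realfun.RGenOpens.measurableE.
move=> _ [A [x [y ->]]] <-.
rewrite setTI; apply: sub_sigma_algebra.
apply: open_comp; first by move=> z _; exact: cf.
exact: interval_open.
Qed.

Lemma coord_cont (i : 'I_p) : continuous (fun x : 'rV[R]_p => x ord0 i).
Proof.
move=> x; apply/(@cvgrPdist_lt _ _ _ (nbhs (x : 'rV[R]_p)) _) => e e0.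
apply/nbhs_ballP; exists e => //= z [_ Hz].
exact: Hz.
Qed.

Lemma open_meas (A : set 'rV[R]_p) : open A -> measurable (A : set (Rp R p)).
Proof. by move=> oA; apply: sub_sigma_algebra. Qed.

Lemma closed_meas (A : set 'rV[R]_p) : closed A -> measurable (A : set (Rp R p)).
Proof.
move=> cA; rewrite -(setCK A); apply: measurableC; apply: open_meas.
exact: closed_openC.
Qed.

Lemma unit_cube_meas : measurable (@unit_cube R p : set (Rp R p)).
Proof.
have -> : @unit_cube R p = \bigcap_(i in setT) ((fun x : 'rV[R]_p => x ord0 i) @^-1` `[0%R, 1%R[%classic).
  apply/seteqP; split => x /=.
    by move=> H i _; rewrite /= in_itv /=; exact: H.
  by move=> H i; have := H i I; rewrite /= in_itv.
apply: fin_bigcap_measurable; first exact: finite_finset.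
move=> i _; rewrite -[X in measurable X]setTI.
have := cont_meas _ (coord_cont i) measurableT _ (measurable_itv `[0%R, 1%R[). by [].
Qed.

Lemma mu_shift (A : set 'rV[R]_p) a : measurable (A : set (Rp R p)) ->
  mu (((fun x => x + a) @` A) : set (Rp R p)) = mu A.
Proof. by case: hmu => H _ mA; exact: H. Qed.

Lemma mu_ball_le1 (c : 'rV[R]_p) : (mu (ball c (2^-1 : R) : set (Rp R p)) <= 1)%E.
Proof.
pose hc : 'rV[R]_p := const_mx (2^-1 : R).
have -> : ball c (2^-1 : R) = (fun x => x + (c - hc)) @` ball hc (2^-1 : R).
  apply/seteqP; split => x /=.
    move=> Hx; exists (x - (c - hc)); last by rewrite subrK.
    case: Hx => h0 Hx; split => // i j; have := Hx i j.
    rewrite /ball /= !mxE.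
    by move=> H; rewrite (_ : _ - _ = c i j - x i j) //; ring.
  move=> [z [h0 Hz] <-]; split => // i j; have := Hz i j.
  rewrite /ball /= !mxE => H.
  by rewrite (_ : _ - _ = 2^-1 - z i j) //; ring.
rewrite mu_shift; last by apply: open_meas; exact: ball_open.
case: hmu => _ <-.
apply: le_measure; rewrite ?inE; [by apply: open_meas; exact: ball_open|exact: unit_cube_meas|].
move=> x [_ Hx] i; have := Hx ord0 i; rewrite /ball /= !mxE => H.
have : `|2^-1 - x ord0 i| < 2^-1 by [].
rewrite ltr_norml => /andP[H1 H2]; apply/andP; split; lra.
Qed.

Lemma mu_balls (s : seq 'rV[R]_p) :
  (mu (\big[setU/set0]_(i <- s) ball i (2^-1 : R) : set (Rp R p)) <= (size s)%:R%:E)%E.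
Proof.
elim: s => [|a s IH]; first by rewrite big_nil measure0.
rewrite big_cons.
apply: le_trans (measureU2 _ _ _) _.
- by apply: open_meas; exact: ball_open.
- apply: bigsetU_measurable => i _; apply: open_meas; exact: ball_open.
have -> : (((size (a :: s))%:R)%:E : \bar R) = (1%:E + ((size s)%:R)%:E)%E by rewrite /= -EFinD addrC natr1.
apply: leeD => //; exact: mu_ball_le1.
Qed.

Lemma mu_compact_fin (X : set 'rV[R]_p) : compact X -> (mu (X : set (Rp R p)) < +oo)%E.
Proof.
move=> cX.
have mX : measurable (X : set (Rp R p)).
  apply: closed_meas; apply: compact_closed => //; exact: norm_hausdorff.
move: cX; rewrite compact_cover => cX.
have [D' _ cov] : finite_subset_cover X (fun c => ball c (2^-1 : R)) X.
  apply: cX; first by move=> i _; exact: ball_open.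
  by move=> x Xx; exists x => //; exact: ballxx.
set C := cover _ _ in cov.
have le1 : (mu (X : set (Rp R p)) <= mu (C : set (Rp R p)))%E.
  apply: le_measure; rewrite ?inE //.
  rewrite /C /cover bigcup_fset; apply: bigsetU_measurable => i _; apply: open_meas; exact: ball_open.
rewrite /C /cover bigcup_fset in le1.
apply: le_lt_trans le1 _.
apply: le_lt_trans (mu_balls _) _.
exact: ltry.
Qed.
End T.

Lemma bigmin_meas (R : realType) (p : nat) (I : Type) (s : seq I) (c : R)
  (F : I -> Rp R p -> R) :
  (forall i, measurable_fun setT (F i)) ->
  measurable_fun (setT : set (Rp R p)) (fun x => \big[Num.min/c]_(i <- s) F i x).
Proof.
move=> mF; elim: s => [|a s IH].
  by under eq_fun do rewrite big_nil; exact: measurable_cst.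
under eq_fun do rewrite big_cons.
exact: measurable_minr.
Qed.

Lemma hmax_nd (R : realType) (h : R -> R) :
  (forall r s : R, 0 <= r -> r <= s -> h r <= h s) ->
  nondecreasing_fun (fun s => h (Num.max s 0)).
Proof.
move=> hmon s s' ss' /=.
have [s0|s0] := leP s 0.
  by apply: hmon => //; rewrite le_max lexx orbT.
have [s'0|s'0] := leP s' 0; first lra.
by apply: hmon => //; exact: ltW.
Qed.

Theorem theorem8 (R : realType) (p k : nat)
    (mu : {measure set (Rp R p) -> \bar R}) (nrm : 'rV[R]_p -> R)
    (X : set 'rV[R]_p) (h : R -> R) (Cr lambda : R)
    (y : 'I_k -> 'rV[R]_p) :
  (0 < p)%N -> (0 < k)%N ->
  is_lebesgue_measure mu ->
  is_norm nrm ->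
  compact X ->
  (forall r : R, 0 <= r -> 0 <= h r) ->
  (forall r s : R, 0 <= r -> r <= s -> h r <= h s) ->
  0 < Cr ->
  0 <= lambda ->
  injective y -> (forall i, X (y i)) ->
  forall (y0 : 'rV[R]_p) (B : set 'rV[R]_p),
    is_ball_of_volume mu nrm y0 (mu (X : set (Rp R p)) * (k%:R^-1)%:E)%E B ->
    ((lambda * k%:R)%:E * Fball mu h nrm Cr y0 B
       <= exp_cost mu X lambda h nrm Cr y)%E.
Proof.
move=> p0 k0 hmu hn cX h0 hmon Cr0 l0 _ _ y0 B [r [r0 [-> hB]]].
have ng0 := @nrm_ge0 R p nrm hn.
pose G := fun z : 'rV[R]_p => Num.min (h (nrm z)) Cr.
pose t := Num.min (h r) Cr.
pose B0 := nball nrm 0 r.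
have G0 : forall z, 0 <= G z by move=> z; rewrite /G le_min h0 ?ng0 //= ltW.
have Gt : forall z, nrm z <= r -> G z <= t.
  by move=> z hz; apply: le_min2 => //; exact: hmon (ng0 z) hz.
have Gt' : forall z, r < nrm z -> t <= h (nrm z).
  move=> z hz; apply: (@le_trans _ _ (h r)); first by rewrite /t ge_min lexx.
  by apply: hmon => //; exact: ltW.
have t0 : 0 <= t by rewrite /t le_min h0 //= ltW.
have tCr : t <= Cr by rewrite /t ge_min lexx orbT.
have mnrm : measurable_fun (setT : set (Rp R p)) (fun z : 'rV[R]_p => nrm z).
  have -> : (fun z : 'rV[R]_p => nrm z) = (fun z => nrm (z - 0)).
    by apply: funext => z; rewrite subr0.
  apply: cont_meas; exact: (nrm_cont _ _ _ hn 0).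
have mhn : measurable_fun (setT : set (Rp R p)) (fun z : 'rV[R]_p => h (nrm z)).
  have -> : (fun z : 'rV[R]_p => h (nrm z)) = (fun s => h (Num.max s 0)) \o (fun z => nrm z).
    by apply: funext => z /=; rewrite max_l // ng0.
  apply: measurableT_comp => //; apply: nondecreasing_measurable => //; exact: hmax_nd.
have mG : measurable_fun (setT : set (Rp R p)) (G : Rp R p -> R).
  exact: (measurable_minr mhn (measurable_cst Cr)).
have mGa : forall a, measurable_fun (setT : set (Rp R p)) (fun x : Rp R p => G (x - a)).
  by move=> a; exact: (measurableT_comp mG (shift_meas _ _ a)).
have mball : forall a, measurable (nball nrm a r : set (Rp R p)).
  move=> a.
  have -> : nball nrm a r = (fun z : 'rV[R]_p => nrm (z - a)) @^-1` `]-oo, r]%classic.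
    by apply/seteqP; split => z /=; rewrite in_itv.
  rewrite -[X in measurable X]setTI.
  exact: (cont_meas _ _ _ (nrm_cont _ _ _ hn a)) measurableT _ (measurable_itv _).
have mX : measurable (X : set (Rp R p)).
  apply: closed_meas; apply: compact_closed => //; exact: norm_hausdorff.
have E1 : forall a, (\int[mu]_(x in (nball nrm a r : set (Rp R p))) (G (x - a))%:E
    = \int[mu]_(x in (B0 : set (Rp R p))) (G x)%:E)%E.
  move=> a.
  have Hpre : (fun x : 'rV[R]_p => (x - a)%R) @^-1` B0 = nball nrm a r.
    by apply/seteqP; split => x; rewrite /B0 /nball /= subr0.
  rewrite -(integral_shift _ _ _ hmu a _ (fun z => (G z)%:E) (mball 0)).
  - by rewrite Hpre.
  - exact/measurable_EFinP/measurable_funTS.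
  - by move=> x _; rewrite lee_fin.
have E2 : forall a, mu (nball nrm a r : set (Rp R p)) = mu (B0 : set (Rp R p)).
  move=> a; rewrite -(mu_shift _ _ _ hmu B0 a (mball 0)); congr (mu _).
  apply/seteqP; split => x /=.
    move=> hx; exists (x - a); last by rewrite subrK.
    by rewrite /B0 /nball /= subr0.
  by move=> [z hz <-]; move: hz; rewrite /B0 /nball /= subr0 addrK.
have [m mXe] : exists m, mu (X : set (Rp R p)) = m%:E.
  exists (fine (mu (X : set (Rp R p)))); rewrite fineK // ge0_fin_numE ?measure_ge0 //.
  exact: mu_compact_fin _ _ _ hmu X cX.
have m0 : 0 <= m by rewrite -lee_fin -mXe measure_ge0.
pose kk : R := k%:R.
have kk0 : 0 < kk by rewrite /kk ltr0n.
have hv : mu (B0 : set (Rp R p)) = (m / kk)%:E by rewrite -(E2 y0) hB mXe -EFinM.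
have Fle : (\int[mu]_(x in (B0 : set (Rp R p))) (G x)%:E <= (t * (m / kk))%:E)%E.
  have -> : ((t * (m / kk))%:E = \int[mu]_(x in (B0 : set (Rp R p))) (cst t%:E) x)%E.
    rewrite integral_cst; [by rewrite EFinM -hv | exact: mball 0].
  apply: ge0_le_integral => //.
  - exact: mball 0.
  - by move=> x _; rewrite lee_fin.
  - exact/measurable_EFinP/measurable_funTS.
  - by move=> x hx; rewrite lee_fin; apply: Gt; move: hx; rewrite /B0 /nball /= subr0.
have [f Fe] : exists f : R, (\int[mu]_(x in (B0 : set (Rp R p))) (G x)%:E = f%:E)%E.
  exists (fine (\int[mu]_(x in (B0 : set (Rp R p))) (G x)%:E)).
  rewrite fineK // ge0_fin_numE; last by apply: integral_ge0 => x _; rewrite lee_fin.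
  exact: le_lt_trans Fle (ltry _).
have f0 : 0 <= f.
  by rewrite -lee_fin -Fe; apply: integral_ge0 => x _; rewrite lee_fin.
have Esum : forall a, (\int[mu]_(x in (nball nrm a r : set (Rp R p))) (t - G (x - a))%:E
    + f%:E = (t * (m / kk))%:E)%E.
  move=> a; rewrite -Fe -(E1 a) -ge0_integralD //.
  - rewrite (eq_integral (fun=> t%:E)); last by move=> x _; rewrite -EFinD subrK.
    by rewrite integral_cst // E2 hv -EFinM.
  - move=> x /= hx; rewrite lee_fin subr_ge0; exact: Gt.
  - apply/measurable_EFinP/measurable_funTS.
    exact: measurable_funB (measurable_cst _) (mGa a).
  - by move=> x _; rewrite lee_fin.
  - exact/measurable_EFinP/measurable_funTS.
pose phi := fun i : 'I_k => ((fun x : Rp R p => (t - G (x - y i))%:E)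
   \_ (nball nrm (y i) r : set (Rp R p))).
have phi0 : forall i x, (0 <= phi i x)%E.
  move=> i x; apply: erestrict_ge0 => z hz; rewrite lee_fin subr_ge0; exact: Gt.
have mphi : forall i, measurable_fun (setT : set (Rp R p)) (phi i).
  move=> i; apply: (measurable_restrictT _ (mball (y i))).1.
  apply/measurable_EFinP/measurable_funTS.
  exact: measurable_funB (measurable_cst _) (mGa (y i)).
have cs_ge0 : forall x, 0 <= cost_set h nrm Cr x y.
  move=> x; rewrite /cost_set; apply: (big_ind (fun v : R => 0 <= v)).
  - exact: ltW.
  - by move=> a b ha hb; rewrite le_min ha hb.
  - by move=> i _; rewrite /Ca; exact: h0 (ng0 _).
have mcs : measurable_fun (setT : set (Rp R p)) (fun x : Rp R p => cost_set h nrm Cr x y).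
  apply: bigmin_meas => i.
  exact: (measurableT_comp mhn (shift_meas _ _ (y i))).
have P1 : forall x, X x ->
    (t%:E <= (cost_set h nrm Cr x y)%:E + \sum_(i < k) phi i x)%E.
  move=> x Xx.
  set S := (\sum_(i < k) phi i x)%E.
  have S0 : (0 <= S)%E by apply: sume_ge0 => i _; exact: phi0.
  have Si : forall i, (phi i x <= S)%E.
    move=> i; rewrite /S (bigD1 i) //=; apply: leeDl.
    by apply: sume_ge0 => j _; exact: phi0.
  rewrite /cost_set; apply: (big_ind (fun v => t%:E <= v%:E + S)%E).
  - by apply: le_trans (leeDl _ S0); rewrite lee_fin.
  - by move=> a b ha hb; case: (leP a b).
  - move=> i _; have [Hx|Hx] := boolP (x \in (nball nrm (y i) r : set (Rp R p))).
      have := Si i; rewrite /phi /patch Hx => H.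
      apply: (@le_trans _ _ ((Ca h nrm x (y i))%:E + (t - G (x - y i))%:E)%E).
        rewrite -EFinD lee_fin.
        have : G (x - y i) <= h (nrm (x - y i)) by rewrite /G ge_min lexx.
        rewrite /Ca; lra.
      exact: leeD.
    rewrite notin_setE in Hx.
    apply: le_trans (leeDl _ S0); rewrite lee_fin /Ca; apply: Gt'.
    by rewrite ltNge; apply/negP.
have I0 : (t%:E * m%:E <= \int[mu]_(x in (X : set (Rp R p))) (cost_set h nrm Cr x y)%:E
     + \sum_(i < k) \int[mu]_(x in (X : set (Rp R p))) phi i x)%E.
  rewrite -(@ge0_integral_sum _ _ _ mu _ mX _ phi (fun i => measurable_funTS (mphi i)) (fun i x _ => phi0 i x)).
  rewrite -ge0_integralD //; first last.
  - by apply: emeasurable_sum => i; exact: measurable_funTS.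
  - by move=> x _; apply: sume_ge0 => i _; exact: phi0.
  - exact/measurable_EFinP/measurable_funTS.
  - by move=> x _; rewrite lee_fin.
  rewrite -mXe -integral_cst //.
  apply: ge0_le_integral => //.
  apply: emeasurable_funD; first exact/measurable_EFinP/measurable_funTS.
  by apply: emeasurable_sum => i; exact: measurable_funTS.
have Di : forall i, (\int[mu]_(x in (X : set (Rp R p))) phi i x <= (t * (m / kk) - f)%:E)%E.
  move=> i.
  apply: (@le_trans _ _ (\int[mu]_(x in (setT : set (Rp R p))) phi i x)%E).
    apply: ge0_subset_integral => //; by move=> x _; exact: phi0.
  rewrite /phi -integral_mkcond EFinB leeBrDr //.
  by rewrite Esum.
have Dsum : (\sum_(i < k) (\int[mu]_(x in (X : set (Rp R p))) phi i x)%E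
    <= ((t * (m / kk) - f) * kk)%:E)%E.
  apply: (le_trans (lee_sum _ (fun i _ => Di i))).
  by rewrite sumEFin sumr_const card_ord mulr_natr.
have FbE : Fball mu h nrm Cr y0 (nball nrm y0 r) = f%:E.
  by rewrite /Fball -Fe -(E1 y0).
rewrite FbE /exp_cost.
rewrite (eq_integral (fun x : Rp R p => (lambda%:E * (cost_set h nrm Cr x y)%:E)%E)); last first.
  by move=> x _; rewrite EFinM.
rewrite ge0_integralZl //; last 2 first.
- exact/measurable_EFinP/measurable_funTS.
- by move=> x _; rewrite lee_fin.
have I0ge : (0 <= \int[mu]_(x in (X : set (Rp R p))) (cost_set h nrm Cr x y)%:E)%E.
  by apply: integral_ge0 => x _; rewrite lee_fin.
have I1 := le_trans I0 (leeD (lexx _) Dsum).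
move: I0ge I1.
set I := (\int[mu]_(x in (X : set (Rp R p))) (cost_set h nrm Cr x y)%:E)%E.
clearbody I.
case: I => [i| |] //.
- move=> i0 H.
  rewrite -EFinM -EFinD lee_fin in H.
  rewrite -!EFinM lee_fin.
  set c := t * (m / kk) in H.
  have ck : c * kk = t * m by rewrite /c -mulrA divfK // gt_eqF.
  have H2 : f * kk <= i by nra.
  have : 0 <= lambda * (i - f * kk) by apply: mulr_ge0 => //; rewrite subr_ge0.
  nra.
- move=> _ _.
  have [->|lp] := eqVneq lambda 0; first by rewrite mul0r mul0e mul0e.
  rewrite [X in (_ <= X)%E]muleC gt0_mulye ?lte_fin; first exact: leey.
  by rewrite lt_def lp l0.
Qed.
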